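(* For $n\ge 2$, let $G^2_n$ be the graph obtained from an edge $u_1u_2$ by adding a set $X$ of $n-2$ new vertices, each adjacent to both $u_1$ and $u_2$ (and no other edges). Then $G^2_n$ is $2$-degenerate and $\mathrm{id}^{\leq 3}(G^2_n)=n-1$. Moreover, $\mathrm{conv}^{\leq 3}(G^2_n)=n-1$ if $n$ is even and $\mathrm{conv}^{\leq 3}(G^2_n)=n-2$ if $n$ is odd.
   Context: A graph is $k$-degenerate if its vertices can be ordered so that each vertex has at most $k$ neighbours later in the order. For an oriented graph $D$ and $X\subseteq V(D)$, the inversion of $X$ reverses every arc with both endvertices in $X$; a $(\leq p)$-inversion is the inversion of a set of at most $p$ vertices. $\mathrm{id}^{\leq p}(G)$ is the maximum, over all ordered pairs $(\vec G_1,\vec G_2)$ of orientations of $G$, of the minimum number of $(\leq p)$-inversions transforming $\vec G_1$ into $\vec G_2$. $\mathrm{conv}^{\leq p}(G)$ is the minimum number of $(\leq p)$-inversions transforming an orientation of $G$ into its converse (all arcs reversed); it does not depend on the orientation. *)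

(* Defs.v *)
From mathcomp Require Import all_boot all_order.
Set Implicit Arguments. Unset Strict Implicit. Unset Printing Implicit Defensive.

(* A simple graph on a finite type T is given by an edge relation e
   (assumed symmetric and irreflexive where relevant). *)

Definition degenerate (T : finType) (e : rel T) (k : nat) : Prop :=
  exists r : T -> nat, injective r /\
    forall x : T, #|[set y | e x y && (r x < r y)%N]| <= k.

(* An orientation of the graph (T, e): a relation o with o x y meaning the arc
   x -> y; only edges are oriented, and each edge in exactly one direction. *)
Definition is_orientation (T : finType) (e : rel T) (o : T -> T -> bool) : Prop :=
  forall x y : T, (o x y -> e x y) /\ (e x y -> o x y != o y x).

Definition invert (T : finType) (X : {set T}) (o : T -> T -> bool) : T -> T -> bool :=
  fun x y => if (x \in X) && (y \in X) then o y x else o x y.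

Definition invert_seq (T : finType) (Xs : seq {set T}) (o : T -> T -> bool)
  : T -> T -> bool := foldl (fun o' X => invert X o') o Xs.

Definition converse (T : finType) (o : T -> T -> bool) : T -> T -> bool :=
  fun x y => o y x.

Definition transformable_le (T : finType) (p : nat) (o1 o2 : T -> T -> bool)
  (k : nat) : Prop :=
  exists Xs : seq {set T}, size Xs <= k /\ all (fun X : {set T} => #|X| <= p) Xs /\
    forall x y, invert_seq Xs o1 x y = o2 x y.

Definition inv_dist_is (T : finType) (p : nat) (o1 o2 : T -> T -> bool)
  (k : nat) : Prop :=
  transformable_le p o1 o2 k /\ forall j, transformable_le p o1 o2 j -> k <= j.

Definition id_le_is (T : finType) (e : rel T) (p k : nat) : Prop :=
  (forall o1 o2, is_orientation e o1 -> is_orientation e o2 ->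
     exists j, j <= k /\ inv_dist_is p o1 o2 j) /\
  (exists o1 o2, is_orientation e o1 /\ is_orientation e o2 /\
     inv_dist_is p o1 o2 k).

Definition conv_le_is (T : finType) (e : rel T) (p k : nat) : Prop :=
  forall o, is_orientation e o -> inv_dist_is p o (converse o) k.

(* G^2_n on vertex set 'I_n: u1 = 0, u2 = 1, X = {2, ..., n-1}; edges u1u2 and
   u_i x for x in X. *)
Definition G2 (n : nat) : rel 'I_n :=
  fun x y => (x != y) && ((x < 2)%N || (y < 2)%N).
Arguments G2 n : clear implicits.

(* Main.v *)
Require Import Defs.
From mathcomp Require Import all_boot all_order zify.
From Stdlib Require Import Classical.
Set Implicit Arguments. Unset Strict Implicit. Unset Printing Implicit Defensive.

Definition cnt (T : finType) (Xs : seq {set T}) (x y : T) : nat :=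
  count (fun X : {set T} => (x \in X) && (y \in X)) Xs.

Lemma invert_seqE (T : finType) (Xs : seq {set T}) o x y :
  invert_seq Xs o x y = if odd (cnt Xs x y) then o y x else o x y.
Proof.
elim: Xs o => [|X Xs IH] o //=.
rewrite /invert_seq /= -/(invert_seq _ _) IH /invert /cnt /=.
rewrite -/(cnt Xs x y) oddD.
by case: (x \in X); case: (y \in X); case: (odd (cnt Xs x y)).
Qed.

Lemma criterion (T : finType) (e : rel T) (o1 o2 : T -> T -> bool) Xs :
  (forall x y, e x y = e y x) ->
  is_orientation e o1 -> is_orientation e o2 ->
  (forall x y, invert_seq Xs o1 x y = o2 x y) <->
  (forall x y, e x y -> odd (cnt Xs x y) = (o1 x y != o2 x y)).
Proof.
move=> es h1 h2; split.
- move=> H x y exy; have := H x y; rewrite invert_seqE.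
  have [_ /(_ exy)] := h1 x y.
  by case: (o1 x y); case: (o1 y x); case: (o2 x y); case: (odd _).
- move=> H x y; rewrite invert_seqE.
  case exy: (e x y).
  + have := H x y exy; have [_ /(_ exy)] := h1 x y.
    by case: (o1 x y); case: (o1 y x); case: (o2 x y); case: (odd _).
  + have [a1 _] := h1 x y; have [b1 _] := h1 y x; have [c1 _] := h2 x y.
    rewrite es in exy.
    have -> : o2 x y = false by apply/negP => /c1; rewrite es exy.
    have -> : o1 x y = false by apply/negP => /a1; rewrite es exy.
    have -> : o1 y x = false by apply/negP => /b1; rewrite exy.
    by case: (odd _).
Qed.

Lemma exists_min (T : finType) p (o1 o2 : T -> T -> bool) k :
  transformable_le p o1 o2 k -> exists j, j <= k /\ inv_dist_is p o1 o2 j.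
Proof.
elim: k => [|k IH] h.
  exists 0; split => //; split => //.
have mono : forall a b, a <= b -> transformable_le p o1 o2 a -> transformable_le p o1 o2 b.
  move=> a b ab [Xs [s [al H]]]; exists Xs; split => //; exact: leq_trans ab.
case: (classic (transformable_le p o1 o2 k)) => hk.
  have [j [jk hj]] := IH hk; exists j; split => //; exact: leqW.
exists k.+1; split => //; split => // j hj.
rewrite ltnNge; apply/negP => jk; apply: hk; exact: mono hj.
Qed.
Set Implicit Arguments. Unset Strict Implicit. Unset Printing Implicit Defensive.

Section S.
Variable m : nat.
Local Notation T := 'I_m.+2.
Definition u0 : T := ord0.
Definition u1 : T := @Ordinal m.+2 1 isT.

Lemma split_sum (F : T -> nat) :
  \sum_(i : T) F i = F u0 + F u1 + \sum_(i : T | 1 < i) F i.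
Proof.
rewrite (bigD1 u0) //= (bigD1 u1) //= addnA; congr (_ + _).
by apply: eq_bigl => i; rewrite -!val_eqE /=; case: i => [[|[|i]] Hi].
Qed.

Lemma card_cols : \sum_(i : T | 1 < i) 1 = m.
Proof.
have := split_sum (fun _ => 1); rewrite sum1_card card_ord.
by rewrite add1n => [[]].
Qed.

Lemma card_split (X : {set T}) :
  #|X| = (u0 \in X) + (u1 \in X) + \sum_(i : T | 1 < i) (i \in X).
Proof.
rewrite -sum1_card -split_sum big_mkcond /=.
by apply: eq_bigr => i _; case: (i \in X).
Qed.

Lemma G2sym : forall x y : T, G2 m.+2 x y = G2 m.+2 y x.
Proof. by move=> x y; rewrite /G2 eq_sym orbC. Qed.

Lemma degen : degenerate (G2 m.+2) 2.
Proof.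
exists (fun x : T => if x < 2 then m.+2 + x else val x); split.
  move=> [x Hx] [y Hy] /= H; apply: val_inj => /=; move: H.
  case: ifP; case: ifP => ? ? H //; lia.
move=> x.
apply: (@leq_trans #|[set u0; u1]|); last by rewrite cards2.
apply: subset_leq_card; apply/subsetP => y; rewrite !inE /G2.
case: x y => [x Hx] [y Hy] /=; rewrite -!val_eqE /=.
case: ifP; case: ifP => ? ? /andP [/andP [_ H1] H]; lia.
Qed.

Lemma arith (b0 b1 : bool) k :
  b0 + b1 + k <= 3 -> b0 * k + b1 * k + odd (b0 * b1 + b0 * k) <= 2.
Proof.
by case: b0; case: b1; case: k => [|[|[|[|k]]]].
Qed.

Lemma odd_sum_le (s : seq {set T}) (f : {set T} -> nat) :
  odd (\sum_(X <- s) f X) <= \sum_(X <- s) odd (f X).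
Proof.
elim: s => [|X s IH]; first by rewrite !big_nil.
rewrite !big_cons oddD.
apply: leq_trans (leq_add (leqnn (odd (f X))) IH).
by case: (odd (f X)); case: (odd _).
Qed.

Lemma sum_le2 (s : seq {set T}) (f : {set T} -> nat) :
  (forall X, X \in s -> f X <= 2) -> \sum_(X <- s) f X <= 2 * size s.
Proof.
elim: s => [|X s IH] H; first by rewrite big_nil.
rewrite big_cons /= mulnS leq_add //.
  by apply: H; rewrite inE eqxx.
by apply: IH => Y hY; apply: H; rewrite inE hY orbT.
Qed.

Lemma cntE (Xs : seq {set T}) x y :
  cnt Xs x y = \sum_(X <- Xs) ((x \in X) && (y \in X)).
Proof.
rewrite /cnt -sum1_count big_mkcond /=.
by apply: eq_bigr => X _; case: (_ && _).
Qed.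

Lemma LB (Xs : seq {set T}) :
  all (fun X : {set T} => #|X| <= 3) Xs ->
  (forall i : T, 1 < i -> odd (cnt Xs u0 i) && odd (cnt Xs u1 i)) ->
  2 * m + odd (cnt Xs u0 u1 + m) <= 2 * size Xs.
Proof.
move=> hall hodd.
pose k := fun X : {set T} => \sum_(i : T | 1 < i) (i \in X).
have h1 : forall X, X \in Xs -> (u0 \in X) * k X + (u1 \in X) * k X
    + odd ((u0 \in X) * (u1 \in X) + (u0 \in X) * k X) <= 2.
  by move=> X /(allP hall) hX; apply: arith; rewrite /k -card_split.
have h2 := sum_le2 h1.
rewrite !big_split /= in h2.
have h3 : forall u, \sum_(X <- Xs) (u \in X) * k X = \sum_(i : T | 1 < i) cnt Xs u i.
  move=> u; rewrite /k.
  under eq_bigr do rewrite big_distrr.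
  rewrite exchange_big /=; apply: eq_bigr => i _; rewrite cntE.
  by apply: eq_bigr => X _; rewrite mulnb.
have h4 : forall u, (forall i : T, 1 < i -> odd (cnt Xs u i)) ->
    m <= \sum_(i : T | 1 < i) cnt Xs u i.
  move=> u hu; apply: (@leq_trans (\sum_(i : T | 1 < i) 1)); first by rewrite card_cols.
  apply: leq_sum => i hi.
  by have := hu i hi; case: (cnt Xs u i).
have h5 : odd (\sum_(i : T | 1 < i) cnt Xs u0 i) = odd m.
  suff: odd (\sum_(i : T | 1 < i) cnt Xs u0 i) = odd (\sum_(i : T | 1 < i) 1) by rewrite card_cols.
  apply: (big_ind2 (fun a b => odd a = odd b)) => //.
    by move=> a b c d h h'; rewrite !oddD h h'.
  by move=> i hi; have /andP [-> _] := hodd i hi.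
have h6 := odd_sum_le Xs (fun X => (u0 \in X) * (u1 \in X) + (u0 \in X) * k X).
rewrite big_split /= h3 oddD h5 in h6.
have e01 : \sum_(X <- Xs) (u0 \in X) * (u1 \in X) = cnt Xs u0 u1.
  by rewrite cntE; apply: eq_bigr => X _; rewrite mulnb.
rewrite e01 in h6.
rewrite h3 h3 in h2.
have a0 := h4 u0 (fun i hi => proj1 (andP (hodd i hi))).
have a1 := h4 u1 (fun i hi => proj2 (andP (hodd i hi))).
rewrite oddD.
move: h2 h6 a0 a1.
set A := \sum_(i | _) cnt Xs u0 i.
set B := \sum_(i | _) cnt Xs u1 i.
set C := \sum_(X <- Xs) _.
move: (odd (cnt Xs u0 u1) (+) odd m) => b.
lia.
Qed.
End S.
Set Implicit Arguments. Unset Strict Implicit. Unset Printing Implicit Defensive.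

Section C.
Variable m : nat.
Local Notation T := 'I_m.+2.
Local Notation u0 := (u0 m).
Local Notation u1 := (u1 m).

Lemma ord2 (x : T) : x < 2 -> x = u0 \/ x = u1.
Proof.
case: x => [[|[|x]] Hx] // _; [left|right]; exact: val_inj.
Qed.

Lemma neq_cols (j : T) : 1 < j -> (j == u0) = false /\ (j == u1) = false.
Proof. by case: j => [[|[|j]] Hj]. Qed.

Variables o1 o2 : T -> T -> bool.
Hypothesis h1 : is_orientation (G2 m.+2) o1.
Hypothesis h2 : is_orientation (G2 m.+2) o2.

Let D x y := o1 x y != o2 x y.

Definition colset (i : T) : {set T} :=
  [set x | ((x == u0) && D u0 i) || ((x == u1) && D u1 i) ||
           ((x == i) && (D u0 i || D u1 i))].

Definition nt := \sum_(i : T | 1 < i) (D u0 i && D u1 i).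
Definition fixb := odd nt != D u0 u1.
Definition Xs := [seq colset i | i <- (filter (fun i : T => 1 < i) (index_enum T))]
  ++ (if fixb then [:: [set u0; u1]] else [::]).

Lemma cnt_cols x y :
  cnt [seq colset i | i <- (filter (fun i : T => 1 < i) (index_enum T))] x y =
  \sum_(i : T | 1 < i) ((x \in colset i) && (y \in colset i)).
Proof. by rewrite cntE big_map big_filter. Qed.

Lemma Dsym x y : G2 m.+2 x y -> D y x = D x y.
Proof.
move=> e; rewrite /D.
have [_ /(_ e)] := h1 x y; have [_ /(_ e)] := h2 x y.
by case: (o1 x y); case: (o1 y x); case: (o2 x y); case: (o2 y x).
Qed.

Lemma u01 : (u0 == u1) = false. Proof. by []. Qed.

Lemma mem0 (i : T) : 1 < i -> (u0 \in colset i) = D u0 i.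
Proof.
move=> hi; have [a b] := neq_cols hi.
by rewrite !inE eqxx u01 (eq_sym u0 i) a /= !orbF.
Qed.

Lemma mem1 (i : T) : 1 < i -> (u1 \in colset i) = D u1 i.
Proof.
move=> hi; have [a b] := neq_cols hi.
by rewrite !inE eqxx eq_sym u01 (eq_sym u1 i) b /= !orbF.
Qed.

Lemma memj (i j : T) : 1 < j -> (j \in colset i) = (j == i) && (D u0 i || D u1 i).
Proof.
move=> hj; have [a b] := neq_cols hj.
by rewrite !inE a b.
Qed.

Lemma sum_delta (j : T) (b : bool) : 1 < j ->
  \sum_(i : T | 1 < i) ((i == j) && b) = b.
Proof.
move=> hj; rewrite (bigD1 j) //= eqxx big1 ?addn0 // => i /andP [_ /negbTE ->].
by [].
Qed.

Lemma cnt_extra (x y : T) : cnt (if fixb then [:: [set u0; u1]] else [::]) x y =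
  fixb && (x \in [set u0; u1]) && (y \in [set u0; u1]).
Proof. by case: fixb => //=; rewrite addn0; case: (_ \in _); case: (_ \in _). Qed.

Lemma col_case (u j : T) : (u = u0 \/ u = u1) -> 1 < j ->
  odd (cnt Xs u j) = D u j.
Proof.
move=> hu hj; rewrite /cnt /Xs count_cat -!/(cnt _ _ _) cnt_extra cnt_cols.
have [a b] := neq_cols hj.
have -> : (j \in [set u0; u1]) = false by rewrite !inE a b.
rewrite andbF addn0.
case: hu => ->.
- rewrite (eq_bigr (fun i => nat_of_bool ((i == j) && D u0 j))); first by rewrite sum_delta //; case: (D _ _).
  move=> i hi; rewrite mem0 // memj //.
  case: (j =P i) => [->|ne]; rewrite ?eqxx; first by case: (D u0 i).
  have -> : (i == j) = false by apply/eqP => e; apply: ne; rewrite e.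
  by rewrite andbF.
- rewrite (eq_bigr (fun i => nat_of_bool ((i == j) && D u1 j))); first by rewrite sum_delta //; case: (D _ _).
  move=> i hi; rewrite mem1 // memj //.
  case: (j =P i) => [->|ne]; rewrite ?eqxx; first by case: (D u1 i); case: (D u0 i).
  have -> : (i == j) = false by apply/eqP => e; apply: ne; rewrite e.
  by rewrite andbF.
Qed.

Lemma pair_case : odd (cnt Xs u0 u1) = D u0 u1.
Proof.
rewrite /cnt /Xs count_cat -!/(cnt _ _ _) cnt_extra cnt_cols.
rewrite (eq_bigr (fun i => nat_of_bool (D u0 i && D u1 i))); last first.
  by move=> i hi; rewrite mem0 // mem1.
rewrite -/nt !inE !eqxx orbT /= andbT oddD /fixb.
by case: (odd nt); case: (D u0 u1).
Qed.

Lemma cnt_sym (Z : seq {set T}) x y : cnt Z x y = cnt Z y x.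
Proof. by apply: eq_count => X; rewrite andbC. Qed.

Lemma key (x y : T) : G2 m.+2 x y -> odd (cnt Xs x y) = D x y.
Proof.
have main : forall x y : T, x < 2 -> G2 m.+2 x y -> odd (cnt Xs x y) = D x y.
  move=> {}x {}y hx e.
  case: (ltnP y 2) => hy; last exact: col_case (ord2 hx) hy.
  move: (e); rewrite /G2 => /andP [ne _].
  case: (ord2 hx) => hx'; case: (ord2 hy) => hy'; subst x y.
  - by rewrite eqxx in ne.
  - exact: pair_case.
  - by rewrite cnt_sym Dsym // pair_case.
  - by rewrite eqxx in ne.
move=> e; case: (ltnP x 2) => hx; first exact: main.
have hy : y < 2.
  by move: (e); rewrite /G2 => /andP [_]; rewrite ltnNge hx.
rewrite cnt_sym -(Dsym e); apply: main => //; by rewrite G2sym.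
Qed.

Lemma construct : transformable_le 3 o1 o2 (m + fixb).
Proof.
exists Xs; split; [|split].
- rewrite /Xs size_cat size_map size_filter -sum1_count card_cols.
  by case: fixb.
- rewrite /Xs all_cat; apply/andP; split.
    apply/allP => X /mapP [i _ ->].
    apply: (@leq_trans #|[set u0; u1; i]|).
      apply: subset_leq_card; apply/subsetP => x; rewrite !inE.
      by case: (x == u0); case: (x == u1); case: (x == i); rewrite ?andbF.
    rewrite -setUA !cardsU1 cards1.
    by case: (u0 \notin _); case: (u1 \notin _).
  by case: fixb => //=; rewrite cards2.
- have := @criterion _ (G2 m.+2) o1 o2 Xs (@G2sym m) h1 h2.
  by case=> _; apply => x y e; exact: key.
Qed.
End C.
Set Implicit Arguments. Unset Strict Implicit. Unset Printing Implicit Defensive.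

Section D.
Variable m : nat.
Local Notation T := 'I_m.+2.
Local Notation u0 := (u0 m).
Local Notation u1 := (u1 m).

Lemma mono p (o1 o2 : T -> T -> bool) a b :
  a <= b -> transformable_le p o1 o2 a -> transformable_le p o1 o2 b.
Proof. move=> ab [Xs [s [al H]]]; exists Xs; split => //; exact: leq_trans ab. Qed.

Lemma LBgen (o1 o2 : T -> T -> bool) j :
  is_orientation (G2 m.+2) o1 -> is_orientation (G2 m.+2) o2 ->
  (forall i : T, 1 < i -> (o1 u0 i != o2 u0 i) && (o1 u1 i != o2 u1 i)) ->
  transformable_le 3 o1 o2 j ->
  2 * m + ((o1 u0 u1 != o2 u0 u1) (+) odd m) <= 2 * j.
Proof.
move=> h1 h2 hc [Xs [s [al H]]].
have := @criterion _ (G2 m.+2) o1 o2 Xs (@G2sym m) h1 h2; case=> /(_ H) K _.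
have hodd : forall i : T, 1 < i -> odd (cnt Xs u0 i) && odd (cnt Xs u1 i).
  move=> i hi; have [a b] := neq_cols hi.
  rewrite K; last by rewrite /G2 eq_sym a.
  rewrite K; last by rewrite /G2 eq_sym b.
  exact: hc.
have := LB al hodd.
rewrite oddD K //.
move: ((o1 u0 u1 != o2 u0 u1) (+) odd m) => c h.
apply: leq_trans h _; by rewrite leq_mul2l s orbT.
Qed.
End D.

Section E.
Variable m : nat.
Local Notation T := 'I_m.+2.
Local Notation u0 := (u0 m).
Local Notation u1 := (u1 m).

Definition oA (x y : T) := G2 m.+2 x y && (x < y).
Definition oB (x y : T) :=
  G2 m.+2 x y && ((x < y) (+) (~~ ((x < 2) && (y < 2)) || ~~ odd m)).

Lemma orient_gen (f : T -> T -> bool) : (forall x y, f x y = f y x) ->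
  is_orientation (G2 m.+2) (fun x y => G2 m.+2 x y && ((x < y) (+) f x y)).
Proof.
move=> fs x y; split; first by case/andP.
move=> e /=; rewrite fs; move: e; rewrite /G2 (eq_sym y x) (orbC (y < 2)).
move=> /andP [ne ->]; rewrite ne /=.
move: ne; rewrite -val_eqE /=.
case: (ltngtP (val x) (val y)) => //= _ _; by case: (f y x).
Qed.

Lemma oA_or : is_orientation (G2 m.+2) oA.
Proof.
move=> x y; have := @orient_gen (fun _ _ => false) (fun _ _ => erefl) x y.
by rewrite /oA !addbF.
Qed.

Lemma oB_or : is_orientation (G2 m.+2) oB.
Proof.
move=> x y.
have fs : forall a b : T, (~~ ((a < 2) && (b < 2)) || ~~ odd m) = (~~ ((b < 2) && (a < 2)) || ~~ odd m).
  by move=> a b; rewrite andbC.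
exact: (orient_gen fs x y).
Qed.

Lemma conv_or (o : T -> T -> bool) : is_orientation (G2 m.+2) o ->
  is_orientation (G2 m.+2) (converse o).
Proof.
move=> h x y; rewrite /converse; have [a b] := h y x; split.
  by move=> /a; rewrite G2sym.
by move=> e; apply: b; rewrite G2sym.
Qed.
End E.

Section F.
Variable m : nat.
Local Notation T := 'I_m.+2.
Local Notation u0 := (u0 m).
Local Notation u1 := (u1 m).

Lemma G2col (i : T) : 1 < i -> G2 m.+2 u0 i /\ G2 m.+2 u1 i.
Proof.
move=> hi; have [a b] := neq_cols hi.
by rewrite /G2 (eq_sym _ i) a (eq_sym _ i) b.
Qed.

Lemma conv_true (o : T -> T -> bool) : is_orientation (G2 m.+2) o ->
  forall x y, G2 m.+2 x y -> o x y != converse o x y.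
Proof. by move=> h x y e; have [_ /(_ e)] := h x y. Qed.

Lemma fix_conv (o : T -> T -> bool) : is_orientation (G2 m.+2) o ->
  fixb o (converse o) = ~~ odd m.
Proof.
move=> h; rewrite /fixb.
have -> : nt o (converse o) = m.
  apply: (etrans _ (card_cols m)); rewrite /nt; apply: eq_bigr => i hi.
  have [a b] := G2col hi.
  by rewrite !conv_true.
by rewrite conv_true //; case: (odd m).
Qed.

Lemma cols_conv (o : T -> T -> bool) : is_orientation (G2 m.+2) o ->
  forall i : T, 1 < i -> (o u0 i != converse o u0 i) && (o u1 i != converse o u1 i).
Proof.
move=> h i hi; have [a b] := G2col hi.
by rewrite !conv_true.
Qed.

Lemma cols_AB : forall i : T, 1 < i ->
  (oA u0 i != oB u0 i) && (oA u1 i != oB u1 i).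
Proof.
move=> i hi; have [a b] := G2col hi.
rewrite /oA /oB a b /=.
have h0 : 0 < i by lia.
by rewrite h0 hi ltnNge hi.
Qed.
End F.

Theorem mainTheorem17 (n : nat) (hn : 2 <= n) :
  degenerate (G2 n) 2 /\
  id_le_is (G2 n) 3 (n - 1) /\
  (~~ odd n -> conv_le_is (G2 n) 3 (n - 1)) /\
  (odd n -> conv_le_is (G2 n) 3 (n - 2)).
Proof.
case: n hn => [|[|m]] // _.
have e1 : m.+2 - 1 = m.+1 by lia.
have e2 : m.+2 - 2 = m by lia.
rewrite e1 e2.
split; first exact: degen.
split; [split|split].
- move=> o1 o2 h1 h2.
  have [j [hj hd]] := exists_min (construct h1 h2).
  exists j; split => //; apply: leq_trans hj _.
  by rewrite -addn1 leq_add2l leq_b1.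
- exists (@oA m), (@oB m); split; first exact: oA_or.
  split; first exact: oB_or.
  split.
    have := construct (@oA_or m) (@oB_or m); apply: mono.
    by rewrite -addn1 leq_add2l leq_b1.
  move=> j hj; have := LBgen (@oA_or m) (@oB_or m) (@cols_AB m) hj.
  have -> : oA (u0 m) (u1 m) = true by [].
  have -> : oB (u0 m) (u1 m) = odd m by rewrite /oB /=; case: (odd m).
  case: (odd m) => /=; lia.
- move=> hev o h; split.
    have := construct h (conv_or h); rewrite fix_conv //.
    by move: hev => /= /negPn ->; rewrite addn1.
  move=> j hj; have := LBgen h (conv_or h) (cols_conv h) hj.
  rewrite conv_true //.
  by move: hev => /= /negPn ->; lia.
- move=> hod o h; split.
    have := construct h (conv_or h); rewrite fix_conv //.
    by move: hod => /= /negPf ->; rewrite addn0.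
  move=> j hj; have := LBgen h (conv_or h) (cols_conv h) hj.
  rewrite conv_true //.
  by move: hod => /= /negPf ->; lia.
Qed.
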